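(* Let $m\ge 2$ be an integer such that $p_1(x)=x^{m+1}+x+1$ is irreducible over $\mathrm{GF}(2)$, and let $F=\mathrm{GF}(2^{m+1})=\mathrm{GF}(2)[x]/(p_1(x))$, whose elements are identified with the polynomials over $\mathrm{GF}(2)$ of degree at most $m$. Let $D_0$ be the multiplication table of $F$ (rows and columns indexed by the elements of $F$, entry in row $a$ and column $b$ equal to $ab$ computed in $F$). Let $D_1$ be the $2^{m+1}\times 4$ submatrix of $D_0$ consisting of the columns indexed by $0,1,x,x+1$, and let $D_2$ be the submatrix of $D_1$ consisting of the $2^m$ rows indexed by the elements of $r_{m-2}\cup\big(x^m+x^{m-1}+r_{m-2}\big)$. Then: (i) $D_1$ is a difference matrix $D(2^{m+1},2^2,2^{m+1})$ over the additive group of $F$; (ii) $\phi(D_2)$ is a difference matrix $D(2^m,2^2,2^m)$ over the additive group of $\mathrm{GF}(2^m)$.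
   Context: $r_{m-2}$ denotes the set of all polynomials over $\mathrm{GF}(2)$ of degree at most $m-2$, and $q+S=\{q+s:s\in S\}$. A difference matrix $D(b,c,g)$ over a finite abelian group $\mathcal{A}$ of order $g$ is a $b\times c$ array with entries in $\mathcal{A}$ such that, for any two distinct columns, their entrywise difference vector contains every element of $\mathcal{A}$ equally often. Elements of $\mathrm{GF}(2^m)$ are identified (as an additive group) with polynomials over $\mathrm{GF}(2)$ of degree at most $m-1$. The truncation projection $\phi$ maps $a_0+a_1x+\cdots+a_mx^m\in F$ to $a_0+a_1x+\cdots+a_{m-1}x^{m-1}$; for an array $D$, $\phi(D)$ is obtained by applying $\phi$ entrywise. *)

(* Defs.v *)
From HB Require Import structures.
From mathcomp Require Import all_boot all_order all_algebra.
Set Implicit Arguments. Unset Strict Implicit. Unset Printing Implicit Defensive.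
Import GRing.Theory.
Local Open Scope ring_scope.

(* A difference matrix D(b,c,g) over a finite abelian group G (of order g):
   a b x c array with entries in G, rows indexed by the elements of a finite
   set S of row labels (#|S| = b), columns indexed by 'I_c, such that for any
   two distinct columns the entrywise difference vector contains every element
   of G equally often. *)
Definition diff_matrix (G : finZmodType) (I : finType) (S : {set I}) (c : nat)
    (D : I -> 'I_c -> G) (b g : nat) : Prop :=
  [/\ #|S| = b, #|G| = g &
      forall j1 j2 : 'I_c, j1 != j2 -> forall u v : G,
        #|[set i in S | D i j1 - D i j2 == u]| =
        #|[set i in S | D i j1 - D i j2 == v]| ].

Definition p1 (m : nat) : {poly 'F_2} := 'X^(m.+1) + 'X + 1.

(* Elements of GF(2^(m+1)) = GF(2)[x]/(p_1): polynomials of degree <= m. *)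
Notation Fm m := {poly_(m.+1) 'F_2}.

Definition Fmul (m : nat) (a b : Fm m) : Fm m :=
  npolyp m.+1 ((val a * val b) %% p1 m).

Definition D0 (m : nat) (a b : Fm m) : Fm m := Fmul a b.

Definition col_label (m : nat) (j : 'I_4) : Fm m :=
  npolyp m.+1 (nth 0 [:: 0; 1; 'X; 'X + 1] j).

Definition D1 (m : nat) (a : Fm m) (j : 'I_4) : Fm m := D0 a (col_label m j).

(* Row labels of D_2: r_{m-2} U (x^m + x^(m-1) + r_{m-2}),
   r_{m-2} = polynomials of degree <= m-2, i.e. size <= m-1. *)
Definition D2_rows (m : nat) : {set Fm m} :=
  [set a : Fm m | leq (size (val a)) m.-1 ||
                  leq (size (val a - ('X^m + 'X^(m.-1)))%R) m.-1].

(* Truncation phi : a_0 + ... + a_m x^m |-> a_0 + ... + a_(m-1) x^(m-1),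
   landing in GF(2^m) identified additively with polynomials of degree <= m-1. *)
Definition phi (m : nat) (a : Fm m) : {poly_m 'F_2} := npolyp m (val a).

(* phi(D_2): D_2 is D_1 restricted to the rows D2_rows; phi applied entrywise. *)
Definition phiD2 (m : nat) (a : Fm m) (j : 'I_4) : {poly_m 'F_2} := phi (D1 a j).

(* Main.v *)
Require Import Defs.
From mathcomp Require Import all_boot all_order all_algebra zify.
Set Implicit Arguments. Unset Strict Implicit. Unset Printing Implicit Defensive.
Import GRing.Theory.
Local Open Scope ring_scope.

Lemma F2_cases (x : 'F_2) : x = 0 \/ x = 1.
Proof. case: x => [[|[|n]]] Hn; [left|right|by []]; exact/val_inj. Qed.

Lemma F2_opp (x : 'F_2) : - x = x.
Proof. by case: (F2_cases x) => ->; [rewrite oppr0 | apply/val_inj]. Qed.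

Lemma F2_add0 (x y : 'F_2) : x + y = 0 -> x = y.
Proof. by move/eqP; rewrite addr_eq0 F2_opp => /eqP. Qed.

Lemma polyF2_opp (p : {poly 'F_2}) : - p = p.
Proof. by apply/polyP => i; rewrite coefN F2_opp. Qed.

Lemma polyF2_pp (p : {poly 'F_2}) : p + p = 0.
Proof. by rewrite -{1}[p]polyF2_opp addNr. Qed.

Lemma valB m (a b : {poly_m 'F_2}) : val (a - b) = val a - val b.
Proof. by []. Qed.

Lemma p1_coef m i : (p1 m)`_i = (i == m.+1)%:R + (i == 1)%:R + (i == 0)%:R.
Proof. by rewrite /p1 !coefD coefXn coefX coef1. Qed.

Lemma size_p1 m : (1 <= m)%N -> size (p1 m) = m.+2.
Proof.
move=> hm; rewrite /p1 -addrA size_polyDl size_polyXn // -[1]/(1%:P) size_XaddC.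
by rewrite ltnS.
Qed.

Lemma p1_0 m : (p1 m)`_0 = 1.
Proof. by rewrite p1_coef /=; apply/val_inj. Qed.
Lemma p1_1 m : (1 <= m)%N -> (p1 m)`_1 = 1.
Proof. by case: m => // m _; rewrite p1_coef /=; apply/val_inj. Qed.
Lemma p1_mid m k : (k.+2 <= m)%N -> (p1 m)`_k.+2 = 0.
Proof. by move=> h; rewrite p1_coef eqSS (ltn_eqF h) /= !addr0. Qed.
Lemma p1_top m : (1 <= m)%N -> (p1 m)`_m.+1 = 1.
Proof. by case: m => // m _; rewrite p1_coef eqxx /= !addr0. Qed.
Lemma p1_big m j : (m.+1 < j)%N -> (p1 m)`_j = 0.
Proof.
move=> h; rewrite p1_coef gtn_eqF //.
by case: j h => [|[|j]] //= _; apply/val_inj.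
Qed.

Lemma p1_neq0 m : (1 <= m)%N -> p1 m != 0.
Proof. by move=> hm; rewrite -size_poly_eq0 size_p1. Qed.

Lemma modp1E m (q : {poly 'F_2}) : (1 <= m)%N -> (size q <= m.+2)%N ->
  q %% p1 m = q - (q`_m.+1)%:P * p1 m.
Proof.
move=> hm sq.
have sr : (size (q - (q`_m.+1)%:P * p1 m)%R < size (p1 m))%N.
  rewrite size_p1 //; apply/leq_sizeP => j hj.
  rewrite coefB coefCM; case: (ltngtP j m.+1) hj => // [hj _|-> _].
    by rewrite p1_big // mulr0 subr0 (nth_default 0 (leq_trans sq hj)).
  by rewrite p1_top // mulr1 subrr.
by rewrite -(modp_small sr) modpD modpN modp_mull oppr0 addr0.
Qed.

Lemma p1_m m : (2 <= m)%N -> (p1 m)`_m = 0.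
Proof. by case: m => [|[|k]] // h; apply: p1_mid. Qed.

Lemma size_cX m (c : {poly 'F_2}) : (size c <= m.+1)%N -> (size (c * 'X)%R <= m.+2)%N.
Proof.
move=> sc; apply: leq_trans (size_mul_leq _ _) _.
by rewrite size_polyX addn2 /= ltnS.
Qed.

Lemma size_cX1 m (c : {poly 'F_2}) : (size c <= m.+1)%N ->
  (size (c * 'X + c)%R <= m.+2)%N.
Proof.
move=> sc; apply: leq_trans (size_polyD _ _) _.
by rewrite geq_max size_cX // (leq_trans sc).
Qed.

Lemma kernel2 m (c e : {poly 'F_2}) : (2 <= m)%N -> e \in [:: 1; 'X; 'X + 1] ->
  (size c <= m.+1)%N -> c`_m = c`_m.-1 ->
  (forall i, (i < m)%N -> ((c * e) %% p1 m)`_i = 0) -> c = 0.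
Proof.
move=> hm he sc hcm H.
have hm1 : (1 <= m)%N by apply: ltnW.
have pm : m.-1.+1 = m := prednK hm1.
have pm2 : m.-2.+1 = m.-1 by case: m hm {sc hcm H hm1 pm} => [|[|k]].
have cbig j : (m < j)%N -> c`_j = 0 by move=> hj; apply: nth_default; apply: leq_trans sc hj.
suff Hc : forall i, (i < m)%N -> c`_i = 0.
  apply/polyP => i; rewrite coef0; case: (ltngtP i m) => [/Hc//|/cbig//|->].
  by rewrite hcm; apply: Hc; lia.
move: he; rewrite !inE => /or3P[/eqP ee|/eqP ee|/eqP ee]; subst e.
- move=> i hi; move: (H i hi); rewrite mulr1 modp_small // size_p1 //.
- have cm0 : c`_m = 0.
    have := H 0%N (ltnW hm); rewrite modp1E ?size_cX // coefB coefCM !coefMX /=.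
    by rewrite p1_0 mulr1 sub0r => /eqP; rewrite oppr_eq0 => /eqP.
  move=> i hi; case: (ltnP i.+1 m) => hi1.
    by have := H _ hi1; rewrite modp1E ?size_cX // coefB coefCM !coefMX /= cm0 mul0r subr0.
  have -> : i = m.-1 by lia.
  by rewrite -hcm.
- rewrite mulrDr mulr1 in H.
  have ht : (c * 'X + c)`_m.+1 = c`_m by rewrite coefD coefMX /= (cbig m.+1) // addr0.
  have H' i : (i < m)%N -> (c * 'X + c)`_i - c`_m * (p1 m)`_i = 0.
    by move=> hi; have := H i hi; rewrite modp1E ?size_cX1 // coefB coefCM ht.
  have c0 : c`_0 = c`_m.
    by have := H' 0%N (ltnW hm); rewrite coefD coefMX /= p1_0 add0r mulr1 => /eqP; rewrite subr_eq0 => /eqP.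
  have Hind k : (k.+1 < m)%N -> c`_k.+1 = 0.
    elim: k => [|k IH] hk.
      have := H' 1%N hk; rewrite coefD coefMX /= p1_1 // mulr1 c0.
      by rewrite (addrC (c`_m)) addrK.
    have := H' k.+2 hk; rewrite coefD coefMX /= (p1_mid (ltnW hk)) mulr0 subr0 IH ?add0r //.
    by apply: ltnW.
  have e1 := pm2.
  have cm1 : c`_m.-1 = 0 by rewrite -e1; apply: Hind; lia.
  by case=> [|k] hk; [rewrite c0 hcm | apply: Hind].
Qed.

Lemma kernel1 m (c e : {poly 'F_2}) : (2 <= m)%N -> e \in [:: 1; 'X; 'X + 1] ->
  (size c <= m.+1)%N -> (c * e) %% p1 m = 0 -> c = 0.
Proof.
move=> hm he sc H.
have hm1 : (1 <= m)%N by apply: ltnW.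
apply: (kernel2 hm he sc) => [|i _]; last by rewrite H coef0.
have cbig j : (m < j)%N -> c`_j = 0 by move=> hj; apply: nth_default; apply: leq_trans sc hj.
have mn0 : (m == 0%N) = false := gtn_eqF hm1.
move: he H; rewrite !inE => /or3P[/eqP ee|/eqP ee|/eqP ee]; subst e.
- by rewrite mulr1 modp_small ?size_p1 // => ->; rewrite !coef0.
- rewrite modp1E ?size_cX // => H.
  have := congr1 (fun p : {poly _} => p`_0) H; rewrite coefB coefCM !coefMX /= p1_0 mulr1 sub0r coef0.
  move=> /eqP; rewrite oppr_eq0 => /eqP cm0.
  have := congr1 (fun p : {poly _} => p`_m) H; rewrite coefB coefCM !coefMX /= mn0 p1_m // mulr0 subr0 coef0.
  by rewrite cm0.
- rewrite mulrDr mulr1 modp1E ?size_cX1 // => H.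
  have := congr1 (fun p : {poly _} => p`_m) H; rewrite coefB coefCM coefD coefMX mn0 p1_m // mulr0 subr0 coef0.
  by move/F2_add0.
Qed.

Lemma fiber1 (I T : finType) (S : {set I}) (f : I -> T) :
  {in S &, injective f} -> #|S| = #|T| ->
  forall u, #|[set i in S | f i == u]| = 1%N.
Proof.
move=> inj hc u.
have hT : f @: S = setT.
  by apply/eqP; rewrite eqEcard subsetT cardsT card_in_imset // hc leqnn.
have : u \in f @: S by rewrite hT inE.
case/imsetP => i iS ->.
suff -> : [set k in S | f k == f i] = [set i] by rewrite cards1.
apply/setP => k; rewrite !inE.
apply/andP/eqP => [[kS /eqP]|->]; last by rewrite iS.
by move/inj; apply.
Qed.

Definition cols : seq {poly 'F_2} := [:: 0; 1; 'X; 'X + 1].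

Lemma col_val m j : (1 <= m)%N -> val (col_label m j) = nth 0 cols j.
Proof.
move=> hm; rewrite /col_label /= npolypK //.
case: j => [[|[|[|[|j]]]] hj] //=.
- by rewrite size_poly0.
- by rewrite size_poly1.
- by rewrite size_polyX.
- by rewrite -[1]/(1%:P) size_XaddC.
Qed.

Lemma size_mod m (q : {poly 'F_2}) : (1 <= m)%N -> (size (q %% p1 m)%R <= m.+1)%N.
Proof. by move=> hm; rewrite -ltnS -(size_p1 hm) ltn_modp p1_neq0. Qed.

Lemma D1_val m a j : (1 <= m)%N -> val (@D1 m a j) = (val a * nth 0 cols j) %% p1 m.
Proof. by move=> hm; rewrite /D1 /D0 /Fmul /= npolypK ?col_val // size_mod. Qed.

Lemma diffs (j1 j2 : 'I_4) : j1 != j2 ->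
  nth 0 cols j1 - nth 0 cols j2 \in [:: 1; 'X; 'X + 1].
Proof.
rewrite /cols.
case: j1 => [[|[|[|[|j1]]]] h1] //; case: j2 => [[|[|[|[|j2]]]] h2] //= _;
  rewrite -[_ - _]/(_ + - _) polyF2_opp ?add0r ?addr0 !inE ?eqxx ?orbT //.
- by rewrite addrC eqxx ?orbT.
- by rewrite addrCA polyF2_pp addr0 eqxx ?orbT.
- by rewrite addrA polyF2_pp add0r eqxx.
- by rewrite -addrA polyF2_pp addr0 eqxx ?orbT.
- by rewrite addrAC polyF2_pp add0r eqxx.
Qed.

Lemma D1_diff m (a : Fm m) (j1 j2 : 'I_4) e : (1 <= m)%N ->
  nth 0 cols j1 - nth 0 cols j2 = e ->
  val (D1 a j1 - D1 a j2) = (val a * e) %% p1 m.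
Proof.
move=> hm <-; rewrite valB !D1_val //.
by rewrite -modpN -modpD -mulrN -mulrDr.
Qed.

Definition hF m (e : {poly 'F_2}) (a : Fm m) : Fm m := npolyp m.+1 ((val a * e) %% p1 m).

Lemma hF_val m e (a : Fm m) : (1 <= m)%N -> val (hF e a) = (val a * e) %% p1 m.
Proof. by move=> hm; rewrite /hF /= npolypK // size_mod. Qed.

Lemma hF_inj m e : (2 <= m)%N -> e \in [:: 1; 'X; 'X + 1] -> injective (@hF m e).
Proof.
move=> hm he a b /(congr1 val); rewrite !hF_val ?(ltnW hm) // => hab.
apply/eqP; rewrite -subr_eq0; apply/eqP; apply/val_inj.
apply: (kernel1 hm he (size_npoly _)).
by rewrite valB mulrBl modpD modpN hab subrr.
Qed.

Lemma card_Fm m : #|Fm m| = (2 ^ m.+1)%N.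
Proof. by rewrite card_npoly card_Fp. Qed.

Lemma part1 m : (2 <= m)%N -> diff_matrix [set: Fm m] (@D1 m) (2 ^ m.+1) (2 ^ m.+1).
Proof.
move=> hm; have hm1 : (1 <= m)%N by apply: ltnW.
split; rewrite ?cardsT ?card_Fm //.
move=> j1 j2 hj u v.
have he := diffs hj.
have Hset w : [set i in [set: Fm m] | D1 i j1 - D1 i j2 == w] =
              [set i in [set: Fm m] | hF (nth 0 cols j1 - nth 0 cols j2) i == w].
  apply/setP => i; rewrite !inE; congr (_ == _); apply/val_inj.
  by rewrite hF_val // (D1_diff _ hm1 (erefl _)).
have inj : {in [set: Fm m] &, injective (hF (nth 0 cols j1 - nth 0 cols j2))}.
  by move=> a b _ _; apply: hF_inj.
by rewrite !Hset !fiber1 ?cardsT.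
Qed.

Lemma coefB_np n (a b : {poly_n 'F_2}) i : (a - b)`_i = a`_i - b`_i.
Proof. by rewrite -coefB. Qed.

Lemma inS m (a : Fm m) : (2 <= m)%N ->
  (a \in D2_rows m) = ((val a)`_m == (val a)`_m.-1).
Proof.
move=> hm; have hm1 : (1 <= m)%N by apply: ltnW.
have pm : m.-1.+1 = m := prednK hm1.
have n1 : (m == m.-1) = false by apply/negbTE; lia.
have n2 : (m.-1 == m) = false by apply/negbTE; lia.
have sa := size_npoly a.
rewrite inE; apply/orP/eqP.
- case => h.
    by rewrite !nth_default // (leq_trans h) // leq_pred.
  move/leq_sizeP: h => h.
  have h1 := h m (leq_pred m); have h2 := h m.-1 (leqnn _).
  move: h1 h2; rewrite !coefB !coefD !coefXn !eqxx n1 n2 /= addr0 add0r.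
  by move=> /eqP; rewrite subr_eq0 => /eqP -> /eqP; rewrite subr_eq0 => /eqP ->.
- move=> h; case: (F2_cases (val a)`_m.-1) => h1; [left|right]; apply/leq_sizeP => j hj.
    case: (ltngtP j m) => [hjm|hjm|->]; last by rewrite h.
      have ej : j = m.-1 by clear -hjm hj pm; lia.
      by rewrite ej.
    by rewrite nth_default //; apply: leq_trans sa hjm.
  rewrite coefB coefD !coefXn.
  case: (ltngtP j m) => [hjm|hjm|->].
  + have ej : j = m.-1 by clear -hjm hj pm; lia.
    by rewrite ej h1 eqxx /=; apply/val_inj.
  + rewrite nth_default; last by apply: leq_trans sa hjm.
    have ->: (j == m.-1) = false by apply/negbTE; clear -hjm pm; lia.
    by rewrite /=; apply/val_inj.
  + by rewrite h h1 n1 /=; apply/val_inj.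
Qed.

Definition kF m (e : {poly 'F_2}) (a : Fm m) : {poly_m 'F_2} :=
  npolyp m ((val a * e) %% p1 m).

Lemma kF_inj m e : (2 <= m)%N -> e \in [:: 1; 'X; 'X + 1] ->
  {in D2_rows m &, injective (@kF m e)}.
Proof.
move=> hm he a b aS bS /npolyP hab.
apply/eqP; rewrite -subr_eq0; apply/eqP; apply/val_inj.
apply: (kernel2 hm he (size_npoly _)).
  move: aS bS; rewrite !inS // => /eqP ha /eqP hb.
  by rewrite valB !coefB ha hb.
move=> i hi; have := hab i; rewrite /kF !coef_npolyp hi.
by rewrite valB mulrBl modpD modpN coefD coefN => ->; rewrite subrr.
Qed.

Lemma kF1_surj m (u : {poly_m 'F_2}) : (2 <= m)%N ->
  exists2 a, a \in D2_rows m & kF 1 a = u.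
Proof.
move=> hm; have hm1 : (1 <= m)%N by apply: ltnW.
have su := size_npoly u.
have n2 : (m.-1 == m) = false by apply/negbTE; clear -hm1; lia.
have sa : (size (val u + (val u)`_m.-1 *: 'X^m)%R <= m.+1)%N.
  apply/leq_sizeP => j hj; rewrite coefD coefZ coefXn (gtn_eqF hj) mulr0 addr0.
  by rewrite nth_default // (leq_trans su (ltnW hj)).
exists (npolyp m.+1 (val u + (val u)`_m.-1 *: 'X^m)).
  rewrite inS // /= npolypK // !coefD !coefZ !coefXn eqxx n2 /=.
  by rewrite (nth_default _ su) mulr0 mulr1 add0r addr0.
apply/npolyP => i; rewrite /kF coef_npolyp /= npolypK // mulr1 modp_small; last first.
  by rewrite size_p1.
case: ifP => hi.
  by rewrite coefD coefZ coefXn (ltn_eqF hi) mulr0 addr0.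
by rewrite nth_default // (leq_trans su) // leqNgt hi.
Qed.

Lemma cardS m : (2 <= m)%N -> #|D2_rows m| = #|{poly_m 'F_2}|.
Proof.
move=> hm.
have inj := @kF_inj m 1 hm (mem_head _ _).
rewrite -(card_in_imset inj) -cardsT; congr #|pred_of_set _|.
apply/setP => u; rewrite inE; case: (kF1_surj u hm) => a aS <-.
by apply: imset_f.
Qed.

Lemma phiD2_diff m (a : Fm m) (j1 j2 : 'I_4) e : (1 <= m)%N ->
  nth 0 cols j1 - nth 0 cols j2 = e -> phiD2 a j1 - phiD2 a j2 = kF e a.
Proof.
move=> hm1 he; apply/npolyP => i.
rewrite coefB_np /phiD2 /phi /kF !coef_npolyp; case: ifP => hi; last by rewrite subrr.
have hi2 : (i < m.+1)%N by rewrite ltnS ltnW.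
rewrite hi2 /= !col_val // -coefB -modpN -modpD -mulrN -mulrDr.
by rewrite he.
Qed.

Lemma part2 m : (2 <= m)%N -> diff_matrix (D2_rows m) (@phiD2 m) (2 ^ m) (2 ^ m).
Proof.
move=> hm; have hm1 : (1 <= m)%N by apply: ltnW.
have cP : #|{poly_m 'F_2}| = (2 ^ m)%N by rewrite card_npoly card_Fp.
split; rewrite ?cardS ?cP //.
move=> j1 j2 hj u v.
have he := diffs hj.
have Hset w : [set i in D2_rows m | phiD2 i j1 - phiD2 i j2 == w] =
              [set i in D2_rows m | kF (nth 0 cols j1 - nth 0 cols j2) i == w].
  by apply/setP => i; rewrite !inE (phiD2_diff _ hm1 (erefl _)).
have inj := kF_inj hm he.
by rewrite !Hset !fiber1 ?cardS.
Qed.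

Theorem theorem1 (m : nat) (hm : (2 <= m)%N) (hirr : irreducible_poly (p1 m)) :
  diff_matrix [set: Fm m] (@D1 m) (2 ^ m.+1) (2 ^ m.+1) /\
  diff_matrix (D2_rows m) (@phiD2 m) (2 ^ m) (2 ^ m).
Proof. by split; [apply: part1 | apply: part2]. Qed.
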